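(* Let $d\ge 1$ and let $z=(W,Y,T)$ be drawn from a distribution $\mathcal{D}$, with features $W\in\mathcal{W}$, real outcome $Y\in\mathbb{R}$ and treatment encoding $T\in\mathbb{R}^d$, satisfying $$Y = T^{\top}\theta_0(W) + f_0(W) + \epsilon_1,\qquad \mathbb{E}[\epsilon_1\mid W,T]=0,$$ $$T = e_0(W)+\epsilon_2,\qquad \mathbb{E}[\epsilon_2\mid W]=\mathbf{0}_d,$$ for functions $\theta_0:\mathcal{W}\to\mathbb{R}^d$, $f_0:\mathcal{W}\to\mathbb{R}$, $e_0:\mathcal{W}\to\mathbb{R}^d$. Let $m_0(w)=\mathbb{E}[Y\mid W=w]$ and $g_0=(m_0,e_0)$. For $\theta:\mathcal{W}\to\mathbb{R}^d$, $m:\mathcal{W}\to\mathbb{R}$, $e:\mathcal{W}\to\mathbb{R}^d$, define the R-loss $$l(\theta,m,e;z)=\Big(Y-m(W)-\big(T-e(W)\big)^{\top}\theta(W)\Big)^2,\qquad L_{\mathcal{D}}(\theta,m,e)=\mathbb{E}_{z\sim\mathcal{D}}[l(\theta,m,e;z)],$$ and write $L_{\mathcal{D}}(\theta,g)$ for $L_{\mathcal{D}}(\theta,m,e)$ when $g=(m,e)$. Let $\Theta$ be a class of functions $\mathcal{W}\to\mathbb{R}^d$ such that $|\theta(W)_i|\le M$ for all $W$, all $\theta\in\Theta$ and all $i\in\{1,\dots,d\}$, and let $\theta^*\in\arg\min_{\theta\in\Theta}L_{\mathcal{D}}(\theta,m_0,e_0)$. Given a sample $S=z_1,\dots,z_n$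 of i.i.d. draws from $\mathcal{D}$, split it into $S_1=z_1,\dots,z_{\lfloor n/2\rfloor}$ and $S_2=S\setminus S_1$. Suppose the nuisance model $g=(m,e)$ is fitted on $S_1$ by a procedure guaranteeing that, for every $\delta\in(0,1)$, with probability at least $1-\delta$, $\|g-g_0\|_{L_2}\triangleq\sqrt{\mathbb{E}_{z\sim\mathcal{D}}\|g(W)-g_0(W)\|_2^2}\le \mathrm{Rate}_{\mathcal{D}}(S_1,\delta)$; and suppose $\theta\in\Theta$ is then fitted on $S_2$ using $g$ in the loss, by a procedure guaranteeing that, for every $\delta\in(0,1)$, with probability at least $1-\delta$, $L_{\mathcal{D}}(\theta,g)-L_{\mathcal{D}}(\theta^*,g)\le \mathrm{Rate}_{\mathcal{D}}(S_2,\delta;\theta,g)$. Then with probability at least $1-\delta$, $$\mathbb{E}\Big[\big(T-e_0(W)\big)^{\top}\big(\theta(W)-\theta^*(W)\big)\Big]^2\le L_{\mathcal{D}}(\theta,g_0)-L_{\mathcal{D}}(\theta^*,g_0)\le \mathrm{Rate}_{\mathcal{D}}(S_2,\delta/2;\theta,g)+2(1+dM^2)\,\mathrm{Rate}_{\mathcal{D}}(S_1,\delta/2)^2.$$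
   Context: This is a treatment-effect estimation setting (here applied at each time step of a time series, with $W$ the conditioning features). The treatment encoding $T\in\mathbb{R}^d$ may be a one-hot vector of a categorical treatment, a cumulative encoding (ones in coordinates $1,\dots,i$ and zeros afterwards for treatment level $i$), or a scalar real treatment ($d=1$); $\theta_0(W)$ is the vector of treatment effects. $\mathrm{Rate}_{\mathcal{D}}(S_1,\delta)$ and $\mathrm{Rate}_{\mathcal{D}}(S_2,\delta;\theta,g)$ denote arbitrary high-probability error bounds of the respective fitting procedures, as specified in the claim. $L_{\mathcal{D}}(\theta,g_0)$ denotes the population R-loss evaluated with the true nuisance functions $(m_0,e_0)$. *)

(* Defs.v *)
From HB Require Import structures.
From mathcomp Require Import all_boot all_order all_algebra.
From mathcomp Require Import all_classical all_reals all_analysis.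
Set Implicit Arguments. Unset Strict Implicit. Unset Printing Implicit Defensive.
Import Order.TTheory GRing.Theory Num.Theory.
Local Open Scope classical_set_scope.
Local Open Scope ring_scope.

Section RLearner.
Context {R : realType} {dW dZ dO : measure_display}
  {Wt : measurableType dW} {Z : measurableType dZ} {Om : measurableType dO}.
Variable d : nat.

Definition nuisance := ((Wt -> R) * (Wt -> 'I_d -> R))%type.

Definition sigmaW (Wf : Z -> Wt) : set (set Z) :=
  <<s preimage_set_system setT Wf measurable >>.

Definition sigmaWT (Wf : Z -> Wt) (Tf : Z -> 'I_d -> R) : set (set Z) :=
  <<s [set X | exists (A : set Wt) (B : 'I_d -> set R),
        [/\ measurable A, (forall i, measurable (B i)) &
            X = Wf @^-1` A `&` [set z | forall i, B i (Tf z i)]]] >>.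

(* E[X | G] = 0 (a.s.), G a sub-sigma-algebra: X integrable and
   E[X 1_A] = 0 for every A in G *)
Definition cond_mean_zero (D : probability Z R) (G : set (set Z)) (X : Z -> R) :=
  D.-integrable setT (EFin \o X) /\
  forall A, G A -> (\int[D]_(z in A) (X z)%:E = 0)%E.

Definition rloss (Wf : Z -> Wt) (Yf : Z -> R) (Tf : Z -> 'I_d -> R)
  (th : Wt -> 'I_d -> R) (g : nuisance) (z : Z) : R :=
  (Yf z - g.1 (Wf z) - \sum_(i < d) (Tf z i - g.2 (Wf z) i) * th (Wf z) i) ^+ 2.

Definition Lrisk (D : probability Z R) (Wf : Z -> Wt) (Yf : Z -> R)
  (Tf : Z -> 'I_d -> R) (th : Wt -> 'I_d -> R) (g : nuisance) : \bar R :=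
  (\int[D]_z (rloss Wf Yf Tf th g z)%:E)%E.

Definition L2dist (D : probability Z R) (Wf : Z -> Wt) (g g0 : nuisance) : \bar R :=
  (Lnorm D 2%:E (fun z => (Num.sqrt ((g.1 (Wf z) - g0.1 (Wf z)) ^+ 2 +
       \sum_(i < d) (g.2 (Wf z) i - g0.2 (Wf z) i) ^+ 2))%:E))%E.

Definition iid_sample (P : probability Om R) (D : probability Z R)
  (S : Om -> nat -> Z) (n : nat) :=
  (forall i, (i < n)%N ->
     measurable_fun setT (fun w => S w i) /\
     forall A, measurable A -> P ((fun w => S w i) @^-1` A) = D A) /\
  (forall A : nat -> set Z, (forall i, measurable (A i)) ->
     P [set w | forall i, (i < n)%N -> A i (S w i)] =
     (\prod_(i < n) P ((fun w => S w i) @^-1` A i))%E).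

Definition firsthalf (S : Om -> nat -> Z) (n : nat) (w : Om) : seq Z :=
  [seq S w i | i <- iota 0 n./2].
Definition secondhalf (S : Om -> nat -> Z) (n : nat) (w : Om) : seq Z :=
  [seq S w i | i <- iota n./2 (n - n./2)].

Definition wp_atleast (P : probability Om R) (delta : R) (E : set Om) :=
  exists F : set Om, [/\ measurable F, ((1 - delta)%:E <= P F)%E & F `<=` E].

End RLearner.

(* Main.v *)
Require Import Defs.
From HB Require Import structures.
From mathcomp Require Import all_boot all_order all_algebra.
From mathcomp Require Import all_classical all_reals all_analysis.
From mathcomp Require Import measurable_realfun ring lra.
Set Implicit Arguments. Unset Strict Implicit. Unset Printing Implicit Defensive.
Import Order.TTheory GRing.Theory Num.Theory.
Local Open Scope classical_set_scope.
Local Open Scope ring_scope.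
Section L2theory.
Context {R : realType} {dZ : measure_display} {Z : measurableType dZ}
  (D : probability Z R).
Implicit Types (f g h : Z -> R) (c : R).

Definition Ei (f : Z -> R) : R := fine (\int[D]_z (f z)%:E)%E.
Definition Int (f : Z -> R) := D.-integrable setT (EFin \o f).
Definition L2 (f : Z -> R) :=
  measurable_fun setT f /\ D.-integrable setT (fun z => (f z ^+ 2)%:E).

Lemma IntE f : Int f -> (\int[D]_z (f z)%:E)%E = (Ei f)%:E.
Proof. by move=> hf; rewrite /Ei fineK //; exact: integrable_fin_num hf. Qed.

Lemma Int_meas f : Int f -> measurable_fun setT f.
Proof. by move=> /integrableP[/measurable_EFinP]. Qed.

Lemma Int_le f g : measurable_fun setT f -> Int g ->
  (forall z, `|f z| <= `|g z|) -> Int f.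
Proof.
move=> mf ig hfg; apply: le_integrable ig => //.
  exact/measurable_EFinP.
by move=> z _ /=; rewrite lee_fin.
Qed.

Lemma Int_cst c : Int (fun=> c).
Proof. exact: finite_measure_integrable_cst. Qed.

Lemma IntD f g : Int f -> Int g -> Int (fun z => f z + g z).
Proof.
move=> hf hg; have := @integrableD _ _ _ D setT measurableT _ _ hf hg.
by apply: eq_integrable => // z _ /=; rewrite EFinD.
Qed.

Lemma IntN f : Int f -> Int (fun z => - f z).
Proof.
move=> hf; have := integrableN hf.
by apply: eq_integrable => // z _ /=; rewrite EFinN.
Qed.

Lemma IntZ k f : Int f -> Int (fun z => k * f z).
Proof.
move=> hf; have := integrableZl measurableT k hf.
by apply: eq_integrable => // z _ /=; rewrite EFinM.
Qed.

Lemma EiD f g : Int f -> Int g -> Ei (fun z => f z + g z) = Ei f + Ei g.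
Proof.
move=> hf hg; apply: EFin_inj; rewrite -IntE; last exact: IntD.
rewrite EFinD -!IntE //.
under eq_integral do rewrite EFinD.
exact: integralD.
Qed.

Lemma EiZ k f : Int f -> Ei (fun z => k * f z) = k * Ei f.
Proof.
move=> hf; apply: EFin_inj; rewrite -IntE; last exact: IntZ.
rewrite EFinM -!IntE //.
under eq_integral do rewrite EFinM.
exact: integralZl.
Qed.

Lemma EiN f : Int f -> Ei (fun z => - f z) = - Ei f.
Proof.
move=> hf; rewrite -mulN1r -EiZ //; congr Ei; apply/funext => z; ring.
Qed.

Lemma Ei_le f g : Int f -> Int g -> (forall z, f z <= g z) -> Ei f <= Ei g.
Proof.
move=> hf hg hfg; rewrite -lee_fin -!IntE //.
by apply: le_integral => // z _; rewrite lee_fin.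
Qed.

Lemma Ei_ge0 f : (forall z, 0 <= f z) -> 0 <= Ei f.
Proof.
move=> h; rewrite /Ei; apply: fine_ge0; apply: integral_ge0 => z _.
by rewrite lee_fin.
Qed.

Lemma L2_Int f : L2 f -> Int f.
Proof.
move=> [mf hf]; apply: (Int_le (g := fun z => 1 + f z ^+ 2)) => //.
  exact: IntD (Int_cst _) hf.
move=> z; rewrite [X in _ <= X]ger0_norm; last by rewrite addr_ge0 // sqr_ge0.
rewrite -[f z ^+ 2]real_normK ?num_real //.
set a := `|f z|; have : 0 <= a by rewrite /a normr_ge0.
by move=> ha; nra.
Qed.

Lemma L2_sqInt f : L2 f -> Int (fun z => f z ^+ 2).
Proof. by case. Qed.

Lemma L2_mulInt f g : L2 f -> L2 g -> Int (fun z => f z * g z).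
Proof.
move=> [mf hf] [mg hg].
apply: (Int_le (g := fun z => f z ^+ 2 + g z ^+ 2)).
- exact: measurable_funM.
- exact: IntD.
move=> z; rewrite [X in _ <= X]ger0_norm; last by rewrite addr_ge0 // sqr_ge0.
rewrite normrM -[f z ^+ 2]real_normK ?num_real // -[g z ^+ 2]real_normK ?num_real //.
have ha := normr_ge0 (f z); have hb := normr_ge0 (g z).
set a := `|f z| in ha *; set b := `|g z| in hb *.
by nra.
Qed.

Lemma L2D f g : L2 f -> L2 g -> L2 (fun z => f z + g z).
Proof.
move=> [mf hf] [mg hg]; split; first exact: measurable_funD.
apply: (Int_le (g := fun z => 2 * f z ^+ 2 + 2 * g z ^+ 2)).
- exact/measurable_funX/measurable_funD.
- by apply: IntD; apply: IntZ.
move=> z; rewrite ger0_norm ?sqr_ge0 // ger0_norm; last first.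
  by rewrite addr_ge0 // mulr_ge0 // sqr_ge0.
by have := sqr_ge0 (f z - g z); nra.
Qed.

Lemma L2Z k f : L2 f -> L2 (fun z => k * f z).
Proof.
move=> [mf hf]; split; first exact: measurable_funM.
apply: eq_integrable (IntZ (k ^+ 2) hf) => // z _ /=.
by rewrite exprMn.
Qed.

Lemma L2N f : L2 f -> L2 (fun z => - f z).
Proof.
move=> hf; have := L2Z (-1) hf.
by have -> : (fun z => -1 * f z) = (fun z => - f z) by apply/funext => z; ring.
Qed.

Lemma L2B f g : L2 f -> L2 g -> L2 (fun z => f z - g z).
Proof. by move=> hf hg; apply: L2D => //; exact: L2N. Qed.

Lemma L2_cst c : L2 (fun=> c).
Proof. by split; [exact: measurable_cst | exact: Int_cst]. Qed.

Lemma L2_sum (I : Type) (s : seq I) (F : I -> Z -> R) :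
  (forall i, L2 (F i)) -> L2 (fun z => \sum_(i <- s) F i z).
Proof.
move=> hF; elim: s => [|i s IH].
  by under eq_fun do rewrite big_nil; exact: L2_cst.
by under eq_fun do rewrite big_cons; exact: L2D.
Qed.

Lemma L2_bdd f h c : L2 f -> measurable_fun setT h ->
  (forall z, `|h z| <= c) -> L2 (fun z => f z * h z).
Proof.
move=> [mf hf] mh hb; split; first exact: measurable_funM.
apply: (Int_le (g := fun z => c ^+ 2 * f z ^+ 2)).
- exact/measurable_funX/measurable_funM.
- exact: IntZ.
move=> z; rewrite !ger0_norm ?sqr_ge0 //; last first.
  by rewrite mulr_ge0 // sqr_ge0.
rewrite exprMn mulrC ler_wpM2r ?sqr_ge0 //.
rewrite -[h z ^+ 2]real_normK ?num_real //.
have h0 := normr_ge0 (h z); have := hb z.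
set a := `|h z| in h0 *; by move=> ha; nra.
Qed.

Lemma L2_bounded h c : measurable_fun setT h ->
  (forall z, `|h z| <= c) -> L2 h.
Proof.
move=> mh hb; have := L2_bdd (L2_cst 1) mh hb.
by under eq_fun do rewrite mul1r.
Qed.

Lemma Ei_sq_expand f g : L2 f -> L2 g ->
  Ei (fun z => (f z + g z) ^+ 2) =
  Ei (fun z => f z ^+ 2) + 2 * Ei (fun z => f z * g z) + Ei (fun z => g z ^+ 2).
Proof.
move=> hf hg.
have -> : (fun z => (f z + g z) ^+ 2) =
   (fun z => (f z ^+ 2 + 2 * (f z * g z)) + g z ^+ 2).
  by apply/funext => z; ring.
rewrite EiD; last 2 first.
- by apply: IntD; [exact: L2_sqInt | apply: IntZ; exact: L2_mulInt].
- exact: L2_sqInt.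
rewrite EiD; [|exact: L2_sqInt| by apply: IntZ; exact: L2_mulInt].
by rewrite EiZ //; exact: L2_mulInt.
Qed.

End L2theory.
Section density.
Context {R : realType} {dW dZ : measure_display} {Wt : measurableType dW}
  {Z : measurableType dZ} (mu : measure Z R) (Wf : Z -> Wt)
  (mW : measurable_fun setT Wf).
Local Open Scope ereal_scope.
Import HBNNSimple.

Lemma int_simple_density (h : {nnsfun Wt >-> R}) (g : Z -> \bar R) :
  measurable_fun setT g -> (forall z, 0 <= g z) ->
  \int[mu]_z ((h (Wf z))%:E * g z) =
  \sum_(r \in range h) (r%:E * \int[mu]_(z in Wf @^-1` (h @^-1` [set r])) g z).
Proof.
move=> mg g0.
transitivity (\int[mu]_z (\sum_(r \in range h)
    ((r * \1_(h @^-1` [set r]) (Wf z))%:E * g z))).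
  apply: eq_integral => z _.
  rewrite fimfunE -fsumEFin // ge0_mule_fsuml // => r.
  exact: nnfun_muleindic_ge0.
rewrite ge0_integral_fsum //; last 2 first.
- move=> r; apply: emeasurable_funM => //; apply/measurable_EFinP.
  apply: measurable_funM => //; apply: measurableT_comp => //.
- by move=> r z _; apply: mule_ge0 => //; rewrite EFinM; exact: nnfun_muleindic_ge0.
apply: eq_fsbigr => r; rewrite inE => -[w _ hw].
have r0 : 0 <= r%:E by rewrite -hw lee_fin.
transitivity (\int[mu]_z (r%:E * (g \_ (Wf @^-1` (h @^-1` [set r]))) z)).
  apply: eq_integral => z _; rewrite epatch_indic /=.
  by rewrite EFinM -muleA; congr (_ * _); rewrite muleC.
rewrite ge0_integralZl //; last 2 first.
- rewrite epatch_indic; apply: emeasurable_funM => //; apply/measurable_EFinP; apply: measurable_indic.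
  by rewrite -[X in measurable X]setTI; apply: mW => //; exact: measurable_sfunP.
- by move=> z _; rewrite /patch; case: ifP.
by rewrite -integral_mkcondr setTI.
Qed.

Lemma density_lim (f : Wt -> \bar R) (mf : measurable_fun setT f)
  (f0 : forall w, 0 <= f w) (g : Z -> \bar R) :
  measurable_fun setT g -> (forall z, 0 <= g z) -> (forall z, g z \is a fin_num) ->
  \int[mu]_z (f (Wf z) * g z) =
  limn (fun n => \sum_(r \in range (nnsfun_approx measurableT mf n))
     (r%:E * \int[mu]_(z in Wf @^-1` (nnsfun_approx measurableT mf n @^-1` [set r])) g z)).
Proof.
move=> mg g0 gfin.
set h := nnsfun_approx measurableT mf.
have -> : \int[mu]_z (f (Wf z) * g z) =
    limn (fun n => \int[mu]_z ((h n (Wf z))%:E * g z)).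
  rewrite -monotone_convergence //; last 3 first.
  - move=> n; apply: emeasurable_funM => //; apply/measurable_EFinP.
    by apply: measurableT_comp => //; exact: measurable_funPT.
  - by move=> n z _; rewrite mule_ge0 // lee_fin.
  - move=> z _ a b ab; rewrite lee_wpmul2r // lee_fin.
    exact/lefP/nd_nnsfun_approx.
  apply: eq_integral => z _; apply/esym/cvg_lim => //.
  apply: cvgeMr => //.
  exact: (cvg_nnsfun_approx measurableT mf (fun w _ => f0 w)).
by congr (limn _); apply/funext => n; rewrite int_simple_density.
Qed.

Lemma density_eq (g1 g2 : Z -> \bar R) (f : Wt -> \bar R) :
  measurable_fun setT g1 -> measurable_fun setT g2 ->
  (forall z, 0 <= g1 z) -> (forall z, 0 <= g2 z) ->
  (forall z, g1 z \is a fin_num) -> (forall z, g2 z \is a fin_num) ->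
  (forall B, measurable B ->
     \int[mu]_(z in Wf @^-1` B) g1 z = \int[mu]_(z in Wf @^-1` B) g2 z) ->
  measurable_fun setT f -> (forall w, 0 <= f w) ->
  \int[mu]_z (f (Wf z) * g1 z) = \int[mu]_z (f (Wf z) * g2 z).
Proof.
move=> m1 m2 p1 p2 f1 f2 hB mf f0.
rewrite (density_lim mf f0 m1 p1 f1) (density_lim mf f0 m2 p2 f2).
congr (limn _); apply/funext => n; apply: eq_fsbigr => r _.
by rewrite hB //; exact: measurable_sfunP.
Qed.

End density.

Lemma maxe_EFin0 {R : realType} (x : R) : maxe x%:E 0%E = (Num.max x 0)%:E.
Proof. by rewrite !maxEle lee_fin; case: ifP. Qed.

Lemma fin_sub0 {R : realType} (a b : \bar R) : a \is a fin_num -> b \is a fin_num ->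
  (a - b = 0 -> a = b)%E.
Proof.
move: a b => [a| |] [b| |] //= _ _ /eqP; rewrite -EFinB eqe subr_eq0.
by move/eqP->.
Qed.

Lemma pos_mul {R : realType} (x y : R) :
  Num.max (x * y) 0 = Num.max y 0 * Num.max x 0 + Num.max (- y) 0 * Num.max (- x) 0.
Proof.
rewrite !maxEle.
have [hx|hx] := lerP x 0; have [hy|hy] := lerP y 0.
all: repeat (case: ifP => ?); try nra.
all: try lra.
Qed.

Section keylemma.
Context {R : realType} {dW dZ : measure_display} {Wt : measurableType dW}
  {Z : measurableType dZ} (D : probability Z R) (Wf : Z -> Wt)
  (mW : measurable_fun setT Wf).
Local Open Scope ereal_scope.

Lemma preimW_meas (B : set Wt) : measurable B -> measurable (Wf @^-1` B).
Proof. by move=> mB; rewrite -[X in measurable X]setTI; exact: mW. Qed.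

Lemma cmz_orth (X : Z -> R) (h : Wt -> R) :
  cond_mean_zero D (sigmaW Wf) X -> measurable_fun setT h ->
  D.-integrable setT (fun z => (X z * h (Wf z))%:E) ->
  \int[D]_z (X z * h (Wf z))%:E = 0.
Proof.
move=> [iX hA] mh iF.
have mX : measurable_fun setT X by case/integrableP: iX => /measurable_EFinP.
pose xp z := Num.max (X z) 0%R; pose xn z := Num.max (- X z)%R 0%R.
pose hp w := Num.max (h w) 0%R; pose hn w := Num.max (- h w)%R 0%R.
have mxp : measurable_fun setT xp by apply: measurable_maxr.
have mxn : measurable_fun setT xn.
  by apply: measurable_maxr => //; exact: measurableT_comp.
have mhp : measurable_fun setT hp by apply: measurable_maxr.
have mhn : measurable_fun setT hn.
  by apply: measurable_maxr => //; exact: measurableT_comp.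
have Xp z : (EFin \o X)^\+ z = (xp z)%:E by rewrite funeposE maxe_EFin0.
have Xn z : (EFin \o X)^\- z = (xn z)%:E by rewrite funenegE maxe_EFin0.
have hB B : measurable B ->
    \int[D]_(z in Wf @^-1` B) (xp z)%:E = \int[D]_(z in Wf @^-1` B) (xn z)%:E.
  move=> mB; have mWB := preimW_meas mB.
  have sB : sigmaW Wf (Wf @^-1` B).
    by apply: sub_sigma_algebra; exists B => //; rewrite setTI.
  have := hA _ sB; rewrite integralE.
  have iXB := integrableS measurableT mWB (@subsetT _ _) iX.
  have f1 := integrable_fin_num mWB (integrable_funepos mWB iXB).
  have f2 := integrable_fin_num mWB (integrable_funeneg mWB iXB).
  have eXp : (EFin \o X)^\+ = (fun z => (xp z)%:E) by apply/funext => z; exact: Xp.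
  have eXn : (EFin \o X)^\- = (fun z => (xn z)%:E) by apply/funext => z; exact: Xn.
  rewrite eXp eXn in f1 f2 *.
  exact: fin_sub0.
have dens (f : Wt -> R) : measurable_fun setT f -> (forall w, (0 <= f w)%R) ->
    \int[D]_z ((f (Wf z))%:E * (xp z)%:E) = \int[D]_z ((f (Wf z))%:E * (xn z)%:E).
  move=> mf f0; apply: (density_eq mW (f := EFin \o f)) => //.
  all: try (by move=> z; rewrite lee_fin /xp /xn le_max lexx orbT).
  all: try (by move=> w /=; rewrite lee_fin).
  - exact: (measurable_EFinP _ xp).2.
  - exact: (measurable_EFinP _ xn).2.
  - exact: (measurable_EFinP _ f).2.
have hp0 w : (0 <= hp w)%R by rewrite /hp le_max lexx orbT.
have hn0 w : (0 <= hn w)%R by rewrite /hn le_max lexx orbT.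
have xp0 z : (0 <= xp z)%R by rewrite /xp le_max lexx orbT.
have xn0 z : (0 <= xn z)%R by rewrite /xn le_max lexx orbT.
have mhW (f1 : Wt -> R) : measurable_fun setT f1 ->
    measurable_fun setT (fun z => (f1 (Wf z))%:E).
  by move=> mf; apply/measurable_EFinP; exact: measurableT_comp.
have Fp : \int[D]_z ((EFin \o (fun z => (X z * h (Wf z))%R))^\+ z) =
    \int[D]_z ((hp (Wf z))%:E * (xn z)%:E) + \int[D]_z ((hn (Wf z))%:E * (xp z)%:E).
  rewrite -dens // [Y in _ = _ + Y]dens //.
  rewrite -ge0_integralD //; last 4 first.
  - by move=> z _; rewrite -EFinM lee_fin mulr_ge0.
  - by apply: emeasurable_funM => //; [exact: mhW | exact/measurable_EFinP].
  - by move=> z _; rewrite -EFinM lee_fin mulr_ge0.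
  - by apply: emeasurable_funM => //; [exact: mhW | exact/measurable_EFinP].
  apply: eq_integral => z _; rewrite funeposE maxe_EFin0 pos_mul.
  by rewrite EFinD !EFinM.
have Fn : \int[D]_z ((EFin \o (fun z => (X z * h (Wf z))%R))^\- z) =
    \int[D]_z ((hp (Wf z))%:E * (xn z)%:E) + \int[D]_z ((hn (Wf z))%:E * (xp z)%:E).
  rewrite -ge0_integralD //; last 4 first.
  - by move=> z _; rewrite -EFinM lee_fin mulr_ge0.
  - by apply: emeasurable_funM => //; [exact: mhW | exact/measurable_EFinP].
  - by move=> z _; rewrite -EFinM lee_fin mulr_ge0.
  - by apply: emeasurable_funM => //; [exact: mhW | exact/measurable_EFinP].
  apply: eq_integral => z _; rewrite funenegE maxe_EFin0 -mulNr pos_mul opprK.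
  by rewrite EFinD !EFinM addeC.
rewrite integralE Fp Fn subee //.
rewrite -Fp; exact: integrable_fin_num (integrable_funepos measurableT iF).
Qed.

End keylemma.
Definition clamp {R : realType} (n : nat) (a : R) : R :=
  Num.min (Num.max a (- n%:R)) n%:R.

Lemma clamp_cases {R : realType} n (a : R) :
  [\/ a <= - n%:R /\ clamp n a = - n%:R,
      - n%:R <= a <= n%:R /\ clamp n a = a |
      n%:R <= a /\ clamp n a = n%:R].
Proof.
have n0 : 0 <= n%:R :> R by [].
have nn : - n%:R <= n%:R :> R by lra.
rewrite /clamp !maxEle !minEle; have [h1|h1] := lerP a (- n%:R).
  by apply: Or31; split => //; rewrite nn.
have [h2|h2] := lerP a n%:R.
  by apply: Or32; split; [apply/andP; split; lra|].
by apply: Or33; split => //; lra.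
Qed.

Lemma clamp_norm {R : realType} n (a : R) : `|clamp n a| <= n%:R.
Proof.
have n0 : 0 <= n%:R :> R by [].
rewrite ler_norml; apply/andP.
by case: (clamp_cases n a) => -[h ->]; [|move: h => /andP[h h']|]; split; lra.
Qed.

Lemma clamp_sq_le {R : realType} n (a : R) : clamp n a ^+ 2 <= a * clamp n a.
Proof.
have n0 : 0 <= n%:R :> R by [].
by case: (clamp_cases n a) => -[h ->]; [|move: h => /andP[h h']|]; nra.
Qed.

Lemma clamp_nd {R : realType} n m (a : R) : (n <= m)%N ->
  clamp n a ^+ 2 <= clamp m a ^+ 2.
Proof.
move=> nm; have : n%:R <= m%:R :> R by rewrite ler_nat.
have n0 : 0 <= n%:R :> R by [].
move=> hnm.
by case: (clamp_cases n a) => -[h ->]; case: (clamp_cases m a) => -[k ->];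
  try move: h => /andP[h h']; try move: k => /andP[k k']; nra.
Qed.

Lemma clamp_id {R : realType} n (a : R) : `|a| <= n%:R -> clamp n a = a.
Proof.
rewrite ler_norml => /andP[h1 h2].
by case: (clamp_cases n a) => -[h ->] //; lra.
Qed.

Section keyL2.
Context {R : realType} {dW dZ : measure_display} {Wt : measurableType dW}
  {Z : measurableType dZ} (D : probability Z R) (Wf : Z -> Wt)
  (mW : measurable_fun setT Wf).

Lemma cmz_Ei (X : Z -> R) (h : Wt -> R) :
  cond_mean_zero D (sigmaW Wf) X -> measurable_fun setT h ->
  Int D (fun z => X z * h (Wf z)) -> Ei D (fun z => X z * h (Wf z)) = 0.
Proof. by move=> c mh i; rewrite /Ei (cmz_orth mW c mh i). Qed.

Lemma cmz_L2 (Y : Z -> R) (m : Wt -> R) :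
  L2 D Y -> measurable_fun setT m ->
  cond_mean_zero D (sigmaW Wf) (fun z => Y z - m (Wf z)) ->
  L2 D (fun z => m (Wf z)).
Proof.
move=> hY mm hc.
have mmW : measurable_fun setT (fun z => m (Wf z)) by exact: measurableT_comp.
have iX : Int D (fun z => Y z - m (Wf z)) by case: hc.
have mY : measurable_fun setT Y by case: hY.
pose t n z := clamp n (m (Wf z)).
have mt n : measurable_fun setT (fun w => clamp n (m w)).
  by apply: measurable_minr => //; apply: measurable_maxr.
have mtW n : measurable_fun setT (t n).
  by apply: (measurableT_comp (mt n)).
have Lt n : L2 D (t n) by apply: (L2_bounded D (mtW n)) => z; exact: clamp_norm.
have bound n : Ei D (fun z => t n z ^+ 2) <= Ei D (fun z => Y z ^+ 2).
  have iXt : Int D (fun z => (Y z - m (Wf z)) * t n z).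
    apply: (Int_le (g := fun z => n%:R * (Y z - m (Wf z)))).
    - by apply: measurable_funM => //; exact: measurable_funB.
    - exact: IntZ.
    - move=> z; rewrite !normrM (ger0_norm (ler0n _ n)) mulrC.
      by rewrite ler_wpM2r // clamp_norm.
  have orth : Ei D (fun z => (Y z - m (Wf z)) * t n z) = 0.
    exact: (cmz_Ei hc (mt n) iXt).
  have iYt : Int D (fun z => Y z * t n z) := L2_mulInt hY (Lt n).
  have emt : (fun z => m (Wf z) * t n z) =
      (fun z => Y z * t n z + - ((Y z - m (Wf z)) * t n z)).
    by apply/funext => z; ring.
  have e1 : Ei D (fun z => m (Wf z) * t n z) = Ei D (fun z => Y z * t n z).
    by rewrite emt EiD ?EiN ?orth ?subr0 //; exact: IntN.
  have iMt : Int D (fun z => m (Wf z) * t n z).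
    by rewrite emt; apply: IntD => //; exact: IntN.
  have le1 : Ei D (fun z => t n z ^+ 2) <= Ei D (fun z => m (Wf z) * t n z).
    by apply: Ei_le => //; [exact: L2_sqInt | move=> z; exact: clamp_sq_le].
  have le2 : Ei D (fun z => 2 * (Y z * t n z)) <=
      Ei D (fun z => Y z ^+ 2 + t n z ^+ 2).
    apply: Ei_le; [exact: IntZ | apply: IntD; exact: L2_sqInt |].
    by move=> z; have := sqr_ge0 (Y z - t n z); nra.
  rewrite EiZ // EiD in le2; [|exact: L2_sqInt|exact: L2_sqInt].
  lra.
split => //.
apply/integrableP; split.
  by apply/measurable_EFinP; exact: measurable_funX.
under eq_integral do rewrite gee0_abs ?lee_fin ?sqr_ge0 //.
have -> : (\int[D]_z ((m (Wf z) ^+ 2)%:E))%E =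
    limn (fun n => \int[D]_z ((t n z ^+ 2)%:E))%E.
  rewrite -monotone_convergence //; last 3 first.
  - by move=> n; apply/measurable_EFinP; exact: measurable_funX.
  - by move=> n z _; rewrite lee_fin sqr_ge0.
  - by move=> z _ a b ab; rewrite lee_fin; exact: clamp_nd.
  apply: eq_integral => z _; apply/esym/lim_near_cst => //.
  have [N hN] : exists N : nat, `|m (Wf z)| <= N%:R.
    exists (Num.trunc `|m (Wf z)|).+1.
    by apply/ltW; apply: real_truncnS_gt; rewrite num_real.
  near=> n; rewrite /t clamp_id //.
  apply: (le_trans hN); rewrite ler_nat.
  by near: n; exact: nbhs_infty_ge.
apply: (@le_lt_trans _ _ (Ei D (fun z => Y z ^+ 2))%:E); last exact: ltry.
apply: lime_le.
  apply: ereal_nondecreasing_is_cvgn => a b ab.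
  apply: ge0_le_integral => //.
  - by move=> z _; rewrite lee_fin sqr_ge0.
  - by apply/measurable_EFinP; exact: measurable_funX.
  - by apply/measurable_EFinP; exact: measurable_funX.
  - by move=> z _; rewrite lee_fin; exact: clamp_nd.
near=> n; rewrite IntE; last exact: L2_sqInt.
by rewrite lee_fin bound.
Unshelve. all: by end_near.
Qed.

End keyL2.
Lemma Int_sum {R : realType} {dZ} {Z : measurableType dZ} (D : probability Z R)
  (I : Type) (s : seq I) (F : I -> Z -> R) :
  (forall i, Int D (F i)) -> Int D (fun z => \sum_(i <- s) F i z).
Proof.
move=> hF; elim: s => [|i s IH].
  by under eq_fun do rewrite big_nil; exact: Int_cst.
by under eq_fun do rewrite big_cons; exact: IntD.
Qed.

Lemma Ei_sum {R : realType} {dZ} {Z : measurableType dZ} (D : probability Z R)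
  (I : Type) (s : seq I) (F : I -> Z -> R) :
  (forall i, Int D (F i)) ->
  Ei D (fun z => \sum_(i <- s) F i z) = \sum_(i <- s) Ei D (F i).
Proof.
move=> hF; elim: s => [|i s IH].
  under eq_fun do rewrite big_nil.
  by rewrite big_nil /Ei integral0.
under eq_fun do rewrite big_cons.
by rewrite EiD ?IH ?big_cons //; exact: Int_sum.
Qed.

Lemma sum_sq_le {R : realType} (I : Type) (s : seq I) (F : I -> R) :
  (\sum_(i <- s) F i) ^+ 2 <= (size s)%:R * \sum_(i <- s) F i ^+ 2.
Proof.
elim: s => [|x s IH]; first by rewrite !big_nil expr0n /= mul0r.
rewrite !big_cons /= -[(size s).+1]addn1 natrD.
set S := \sum_(i <- s) F i in IH *; set Q := \sum_(i <- s) F i ^+ 2 in IH *.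
have Q0 : 0 <= Q by rewrite /Q sumr_ge0 // => i _; exact: sqr_ge0.
have n0 : 0 <= (size s)%:R :> R by [].
set n := (size s)%:R in IH n0 *.
have hE : 0 <= Q + n * F x ^+ 2 - 2 * F x * S.
  have [hn|np] := eqVneq n 0.
    rewrite hn mul0r in IH *.
    have -> : S = 0 by apply/eqP; rewrite -sqrf_eq0 eq_le sqr_ge0 andbT.
    lra.
  have npos : 0 < n by rewrite lt_def np n0.
  have : 0 <= n * (Q + n * F x ^+ 2 - 2 * F x * S).
    by have := sqr_ge0 (S - n * F x); nra.
  by rewrite pmulr_rge0.
nra.
Qed.

Lemma prob_inter {R : realType} {dO} {Om : measurableType dO} (P : probability Om R)
  (F1 F2 : set Om) (a b : R) : measurable F1 -> measurable F2 ->
  ((1 - a)%:E <= P F1)%E -> ((1 - b)%:E <= P F2)%E ->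
  ((1 - (a + b))%:E <= P (F1 `&` F2))%E.
Proof.
move=> m1 m2 h1 h2.
have fin A : measurable A -> P A = (fine (P A))%:E.
  by move=> mA; rewrite fineK // fin_num_measure.
have hU : P (F1 `|` F2) = (P F1 + P F2 - P (F1 `&` F2))%E := measureUfinl (mu := P) m1 m2 (le_lt_trans (probability_le1 P m1) (ltry _)).
have le1 := probability_le1 P (measurableU _ _ m1 m2).
have E1 := fin _ m1; have E2 := fin _ m2.
have EU := fin _ (measurableU _ _ m1 m2); have EI := fin _ (measurableI _ _ m1 m2).
have hU' : fine (P (F1 `|` F2)) = fine (P F1) + fine (P F2) - fine (P (F1 `&` F2)).
  by apply: EFin_inj; rewrite EFinB EFinD -E1 -E2 -EU -EI.
rewrite EU in le1; rewrite E1 in h1; rewrite E2 in h2; rewrite EI.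
rewrite !lee_fin in le1 h1 h2 *; lra.
Qed.
Section core.
Context {R : realType} {dW dZ : measure_display} {Wt : measurableType dW}
  {Z : measurableType dZ} (d : nat) (D : probability Z R)
  (Wf : Z -> Wt) (Yf : Z -> R) (Tf : Z -> 'I_d -> R)
  (e0 : Wt -> 'I_d -> R) (m0 : Wt -> R)
  (Theta : set (Wt -> 'I_d -> R)) (M : R).
Hypothesis mW : measurable_fun setT Wf.
Hypothesis mY : measurable_fun setT Yf.
Hypothesis mT : forall i, measurable_fun setT (fun z => Tf z i).
Hypothesis iY2 : D.-integrable setT (fun z => (Yf z ^+ 2)%:E).
Hypothesis iT2 : forall i, D.-integrable setT (fun z => (Tf z i ^+ 2)%:E).
Hypothesis me0 : forall i, measurable_fun setT (fun w => e0 w i).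
Hypothesis hce : forall i, cond_mean_zero D (sigmaW Wf) (fun z => Tf z i - e0 (Wf z) i).
Hypothesis mm0 : measurable_fun setT m0.
Hypothesis hcm : cond_mean_zero D (sigmaW Wf) (fun z => Yf z - m0 (Wf z)).
Hypothesis mTh : forall th, Theta th -> forall i, measurable_fun setT (fun w => th w i).
Hypothesis bTh : forall th, Theta th -> forall w i, `|th w i| <= M.

Definition uu z := Yf z - m0 (Wf z).
Definition eps i z := Tf z i - e0 (Wf z) i.
Definition rr (th : Wt -> 'I_d -> R) z := uu z - \sum_(i < d) eps i z * th (Wf z) i.

Lemma Lu : L2 D uu.
Proof.
apply: L2B; first by split.
exact: (cmz_L2 mW (conj mY iY2) mm0 hcm).
Qed.

Lemma Leps i : L2 D (eps i).
Proof.
apply: L2B; first by split.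
exact: (cmz_L2 mW (conj (mT i) (iT2 i)) (me0 i) (hce i)).
Qed.

Lemma L2th th i : Theta th -> L2 D (fun z => th (Wf z) i).
Proof.
move=> hth; apply: (L2_bounded D (c := M)); last by move=> z; exact: bTh.
exact: measurableT_comp (mTh hth i) mW.
Qed.

Lemma mth th i : Theta th -> measurable_fun setT (fun z => th (Wf z) i).
Proof. by move=> hth; case: (L2th i hth). Qed.

Lemma Lrr th : Theta th -> L2 D (rr th).
Proof.
move=> hth; apply: L2B; first exact: Lu.
apply: L2_sum => i; apply: (L2_bdd (c := M) (Leps i) (mth i hth)).
by move=> z; exact: bTh.
Qed.

Lemma Lrisk0 th : Theta th ->
  Lrisk D Wf Yf Tf th (m0, e0) = (Ei D (fun z => rr th z ^+ 2))%:E.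
Proof. by move=> hth; rewrite /Lrisk -IntE //; exact: (L2_sqInt (Lrr hth)). Qed.

Lemma orth_theta th th' : Theta th -> Theta th' ->
  (\int[D]_z (\sum_(i < d) (Tf z i - e0 (Wf z) i) *
        (th (Wf z) i - th' (Wf z) i))%:E = 0)%E.
Proof.
move=> h1 h2.
have iF i : Int D (fun z => eps i z * (th (Wf z) i - th' (Wf z) i)).
  apply: (L2_mulInt (Leps i)); apply: L2B; exact: L2th.
rewrite (IntE (f := fun z => \sum_(i < d) eps i z * (th (Wf z) i - th' (Wf z) i))); last first.
  by apply: Int_sum => i; exact: iF.
rewrite Ei_sum; last exact: iF.
rewrite big1 // => i _.
apply: (cmz_Ei mW (hce i) (h := fun w => th w i - th' w i)).
  by apply: measurable_funB; exact: mTh.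
exact: iF.
Qed.

Section withg.
Variables (m : Wt -> R) (e : Wt -> 'I_d -> R) (Rt1 : R).
Hypothesis mm : measurable_fun setT m.
Hypothesis me : forall i, measurable_fun setT (fun w => e w i).
Hypothesis hR1 : (L2dist D Wf (m, e) (m0, e0) <= Rt1%:E)%E.

Definition aa z := m (Wf z) - m0 (Wf z).
Definition bb i z := e (Wf z) i - e0 (Wf z) i.
Definition qq z := aa z ^+ 2 + \sum_(i < d) bb i z ^+ 2.

Lemma maa : measurable_fun setT aa.
Proof. by apply: measurable_funB; [exact: measurableT_comp mm mW | exact: measurableT_comp mm0 mW]. Qed.

Lemma mbb i : measurable_fun setT (bb i).
Proof. by apply: measurable_funB; [exact: measurableT_comp (me i) mW | exact: measurableT_comp (me0 i) mW]. Qed.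

Lemma mqq : measurable_fun setT qq.
Proof.
apply: measurable_funD; first exact/measurable_funX/maa.
by apply: measurable_sum => i; exact/measurable_funX/mbb.
Qed.

Lemma qq0 z : 0 <= qq z.
Proof.
by rewrite /qq addr_ge0 ?sqr_ge0 // sumr_ge0 // => i _; exact: sqr_ge0.
Qed.

Lemma Lqq : Int D qq /\ Ei D qq <= Rt1 ^+ 2.
Proof.
have key : (\int[D]_z (qq z)%:E = (L2dist D Wf (m, e) (m0, e0)) `^ 2)%E.
  rewrite /L2dist poweR_Lnorm //; apply: eq_integral => z _ /=.
  rewrite ger0_norm ?sqrtr_ge0 // powR_mulrn ?sqrtr_ge0 // sqr_sqrtr //; exact: (qq0 z).
have N0 : (0 <= L2dist D Wf (m, e) (m0, e0))%E by rewrite /L2dist; exact: Lnorm_ge0.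
move: (L2dist D Wf (m, e) (m0, e0)) key hR1 N0 => N key hN1 N0.
have [n Nn] : exists n : R, N = n%:E.
  by move: N N0 hN1 {key} => [n| |] // _ _; exists n.
rewrite Nn lee_fin in hN1 N0; rewrite Nn poweR_EFin powR_mulrn // in key.
have iq : Int D qq.
  apply/integrableP; split; first exact/measurable_EFinP/mqq.
  under eq_integral do rewrite /= ger0_norm ?qq0 //.
  by rewrite key ltry.
split => //.
rewrite -lee_fin -IntE // key lee_fin.
have n0 : 0 <= n by rewrite -lee_fin. 
by nra.
Qed.

Lemma Laa : L2 D aa.
Proof.
split; first exact: maa.
apply: (Int_le (g := qq)); [exact/measurable_funX/maa | exact: Lqq.1 |].
move=> z; rewrite !ger0_norm ?sqr_ge0 ?qq0 //.
by rewrite /qq lerDl sumr_ge0 // => i _; exact: sqr_ge0.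
Qed.

Lemma Lbb i : L2 D (bb i).
Proof.
split; first exact: mbb.
apply: (Int_le (g := qq)); [exact/measurable_funX/mbb | exact: Lqq.1 |].
move=> z; rewrite !ger0_norm ?sqr_ge0 ?qq0 //.
rewrite /qq (bigD1 i) //= addrCA lerDl addr_ge0 ?sqr_ge0 //.
by rewrite sumr_ge0 // => j _; exact: sqr_ge0.
Qed.

Definition Dt (th : Wt -> 'I_d -> R) w :=
  - (m w - m0 w) + \sum_(i < d) (e w i - e0 w i) * th w i.
Definition Dl th z := Dt th (Wf z).

Lemma mDt th : Theta th -> measurable_fun setT (Dt th).
Proof.
move=> hth; apply: measurable_funD.
  by apply: measurableT_comp => //; exact: measurable_funB.
apply: measurable_sum => i; apply: measurable_funM; last exact: mTh.
exact: measurable_funB.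
Qed.

Lemma LDl th : Theta th -> L2 D (Dl th).
Proof.
move=> hth; apply: L2D; first exact/L2N/Laa.
apply: L2_sum => i; apply: (L2_bdd (c := M) (Lbb i) (mth i hth)).
by move=> z; exact: bTh.
Qed.

Lemma orth_rD th th' : Theta th -> Theta th' ->
  Ei D (fun z => rr th z * Dl th' z) = 0.
Proof.
move=> h h'.
have LD := LDl h'.
have iE i : Int D (fun z => eps i z * (th (Wf z) i * Dt th' (Wf z))).
  apply: L2_mulInt; first exact: Leps.
  have := L2_bdd (c := M) LD (mth i h) (fun z => bTh h (Wf z) i).
  by under eq_fun do rewrite mulrC.
have iU : Int D (fun z => uu z * Dt th' (Wf z)) by exact: L2_mulInt Lu LD.
have -> : (fun z => rr th z * Dl th' z) = (fun z => uu z * Dt th' (Wf z) +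
    - \sum_(i < d) eps i z * (th (Wf z) i * Dt th' (Wf z))).
  apply/funext => z; rewrite /rr /Dl mulrBl mulr_suml; congr (_ - _).
  by apply: eq_bigr => i _; rewrite mulrA.
rewrite EiD //; last by apply: IntN; apply: Int_sum => i; exact: iE.
rewrite EiN; last by apply: Int_sum => i; exact: iE.
rewrite Ei_sum; last exact: iE.
rewrite big1 ?oppr0 ?addr0.
  exact: (cmz_Ei mW hcm (mDt h') iU).
move=> i _.
apply: (cmz_Ei mW (hce i) (h := fun w => th w i * Dt th' w)); last exact: iE.
by apply: measurable_funM; [exact: mTh | exact: mDt].
Qed.

Lemma Lrisk_g th : Theta th ->
  Lrisk D Wf Yf Tf th (m, e) =
  (Ei D (fun z => rr th z ^+ 2) + Ei D (fun z => Dl th z ^+ 2))%:E.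
Proof.
move=> hth.
have hz z : rloss Wf Yf Tf th (m, e) z = (rr th z + Dl th z) ^+ 2.
  rewrite /rloss /rr /Dl /Dt /uu /eps /=; congr (_ ^+ 2).
  have -> : \sum_(i < d) (Tf z i - e (Wf z) i) * th (Wf z) i =
     \sum_(i < d) (Tf z i - e0 (Wf z) i) * th (Wf z) i -
     \sum_(i < d) (e (Wf z) i - e0 (Wf z) i) * th (Wf z) i.
    by rewrite -sumrB; apply: eq_bigr => i _; ring.
  ring.
rewrite /Lrisk; under eq_integral do rewrite hz.
rewrite IntE; last by apply/L2_sqInt/L2D; [exact: Lrr | exact: LDl].
congr EFin.
rewrite Ei_sq_expand ?orth_rD //; [|exact: Lrr|exact: LDl].
by rewrite mulr0 addr0.
Qed.

Lemma size_io : size (index_enum 'I_d) = d.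
Proof. by rewrite -[index_enum _]enumT size_enum_ord. Qed.

Lemma Dl_bound th : Theta th ->
  Ei D (fun z => Dl th z ^+ 2) <= 2 * (1 + d%:R * M ^+ 2) * Rt1 ^+ 2.
Proof.
move=> hth.
have c0 : 0 <= 2 * (1 + d%:R * M ^+ 2).
  by rewrite mulr_ge0 // addr_ge0 // mulr_ge0 // sqr_ge0.
have pw z : Dl th z ^+ 2 <= 2 * (1 + d%:R * M ^+ 2) * qq z.
  rewrite /Dl /Dt /qq -/(aa z).
  set B := \sum_(i < d) _.
  have hB : B ^+ 2 <= d%:R * \sum_(i < d) ((e (Wf z) i - e0 (Wf z) i) * th (Wf z) i) ^+ 2.
    by have := sum_sq_le (index_enum 'I_d)
       (fun i => (e (Wf z) i - e0 (Wf z) i) * th (Wf z) i); rewrite size_io.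
  have hS : \sum_(i < d) ((e (Wf z) i - e0 (Wf z) i) * th (Wf z) i) ^+ 2 <=
      M ^+ 2 * \sum_(i < d) bb i z ^+ 2.
    rewrite mulr_sumr; apply: ler_sum => i _; rewrite exprMn mulrC.
    apply: ler_wpM2r; first exact: sqr_ge0.
    rewrite -[th _ i ^+ 2]real_normK ?num_real //.
    have := bTh hth (Wf z) i; have := normr_ge0 (th (Wf z) i).
    by move: (`|_|) => t t0 tM; nra.
  have Q0 : 0 <= \sum_(i < d) bb i z ^+ 2.
    by rewrite sumr_ge0 // => i _; exact: sqr_ge0.
  have dM : 0 <= d%:R * M ^+ 2 by rewrite mulr_ge0 // sqr_ge0.
  set Q := \sum_(i < d) bb i z ^+ 2 in hS Q0 *.
  set S := \sum_(i < d) _ in hB hS.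
  have := sqr_ge0 (aa z + B).
  have hdS : d%:R * S <= d%:R * (M ^+ 2 * Q) by rewrite ler_wpM2l.
  have a0 := sqr_ge0 (aa z).
  nra.
have [iq Eq] := Lqq.
apply: (le_trans (y := Ei D (fun z => 2 * (1 + d%:R * M ^+ 2) * qq z))).
  apply: Ei_le => //; first exact: L2_sqInt (LDl hth).
  exact: IntZ.
rewrite EiZ //; exact: ler_wpM2l.
Qed.

End withg.

End core.
Unset Implicit Arguments.

Theorem proposition3 (R : realType) (dW dZ dO : measure_display)
  (Wt : measurableType dW) (Z : measurableType dZ) (Om : measurableType dO)
  (d : nat) (D : probability Z R)
  (Wf : Z -> Wt) (Yf : Z -> R) (Tf : Z -> 'I_d -> R)
  (theta0 : Wt -> 'I_d -> R) (f0 : Wt -> R) (e0 : Wt -> 'I_d -> R)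
  (m0 : Wt -> R)
  (Theta : set (Wt -> 'I_d -> R)) (M : R) (thetas : Wt -> 'I_d -> R)
  (P : probability Om R) (n : nat) (S : Om -> nat -> Z)
  (gfit : seq Z -> nuisance d)
  (thfit : seq Z -> nuisance d -> (Wt -> 'I_d -> R))
  (Rate1 : seq Z -> R -> R)
  (Rate2 : seq Z -> R -> (Wt -> 'I_d -> R) -> nuisance d -> R) :
  (1 <= d)%N ->
  (* random variables W, Y, T of z ~ D; Y and T square integrable *)
  measurable_fun setT Wf -> measurable_fun setT Yf ->
  (forall i, measurable_fun setT (fun z => Tf z i)) ->
  D.-integrable setT (fun z => (Yf z ^+ 2)%:E) ->
  (forall i, D.-integrable setT (fun z => (Tf z i ^+ 2)%:E)) ->
  (* Y = T^T theta0(W) + f0(W) + eps1,  E[eps1 | W, T] = 0 *)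
  cond_mean_zero D (sigmaWT Wf Tf)
    (fun z => Yf z - (\sum_(i < d) Tf z i * theta0 (Wf z) i) - f0 (Wf z)) ->
  (* T = e0(W) + eps2,  E[eps2 | W] = 0 *)
  (forall i, measurable_fun setT (fun w => e0 w i)) ->
  (forall i, cond_mean_zero D (sigmaW Wf) (fun z => Tf z i - e0 (Wf z) i)) ->
  (* m0(w) = E[Y | W = w] *)
  measurable_fun setT m0 ->
  cond_mean_zero D (sigmaW Wf) (fun z => Yf z - m0 (Wf z)) ->
  (* the class Theta: measurable, bounded by M *)
  (forall th, Theta th -> forall i, measurable_fun setT (fun w => th w i)) ->
  (forall th, Theta th -> forall w i, `|th w i| <= M) ->
  (* theta* in argmin_{theta in Theta} L_D(theta, m0, e0) *)
  Theta thetas ->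
  (forall th, Theta th ->
     (Lrisk D Wf Yf Tf thetas (m0, e0) <= Lrisk D Wf Yf Tf th (m0, e0))%E) ->
  (* i.i.d. sample *)
  iid_sample P D S n ->
  (* nuisance fitting on S1 *)
  (forall s, measurable_fun setT (gfit s).1 /\
             forall i, measurable_fun setT (fun w => (gfit s).2 w i)) ->
  (forall delta, 0 < delta < 1 ->
     wp_atleast P delta [set w |
       (L2dist D Wf (gfit (firsthalf S n w)) (m0, e0)
          <= (Rate1 (firsthalf S n w) delta)%:E)%E]) ->
  (* theta fitting on S2 using g *)
  (forall s g, Theta (thfit s g)) ->
  (forall delta, 0 < delta < 1 ->
     wp_atleast P delta [set w |
       let g := gfit (firsthalf S n w) in
       let th := thfit (secondhalf S n w) g in
       (Lrisk D Wf Yf Tf th g - Lrisk D Wf Yf Tf thetas g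
          <= (Rate2 (secondhalf S n w) delta th g)%:E)%E]) ->
  forall delta, 0 < delta < 1 ->
    wp_atleast P delta [set w |
      let g := gfit (firsthalf S n w) in
      let th := thfit (secondhalf S n w) g in
      let a := (\int[D]_z (\sum_(i < d) (Tf z i - e0 (Wf z) i) *
                             (th (Wf z) i - thetas (Wf z) i))%:E)%E in
      (a * a <= Lrisk D Wf Yf Tf th (m0, e0) - Lrisk D Wf Yf Tf thetas (m0, e0))%E /\
      (Lrisk D Wf Yf Tf th (m0, e0) - Lrisk D Wf Yf Tf thetas (m0, e0)
        <= (Rate2 (secondhalf S n w) (delta / 2) th g +
            2 * (1 + d%:R * M ^+ 2) * (Rate1 (firsthalf S n w) (delta / 2)) ^+ 2)%:E)%E].
Proof.
move=> hd mW mY mT iY2 iT2 _ me0 hce mm0 hcm mTh bTh Ths argmin _ mg hR1 thTh hR2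
  delta hdelta.
have [d0 d1] : 0 < delta /\ delta < 1 by move: hdelta => /andP[].
have hd2 : 0 < delta / 2 < 1 by apply/andP; split; lra.
have [F1 [mF1 pF1 sF1]] := hR1 _ hd2.
have [F2 [mF2 pF2 sF2]] := hR2 _ hd2.
exists (F1 `&` F2); split.
- exact: measurableI.
- have := prob_inter mF1 mF2 pF1 pF2.
  by have -> : delta / 2 + delta / 2 = delta by field.
move=> w [w1 w2]; have h1 := sF1 _ w1; have h2 := sF2 _ w2.
move: h1 h2 => /= h1 h2.
have hth := thTh (secondhalf S n w) (gfit (firsthalf S n w)).
have hmg := mg (firsthalf S n w).
move: h1 h2 hth hmg.
move: (Rate1 (firsthalf S n w) (delta / 2)) (Rate2 (secondhalf S n w) (delta / 2))
  (thfit (secondhalf S n w)) (gfit (firsthalf S n w)) => r1 r2 thf [m e].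
set th := thf (m, e) => h1 h2 hth [mm me].
have L0 := Lrisk0 mW mY mT iY2 iT2 me0 hce mm0 hcm mTh bTh.
have Lg := Lrisk_g mW mY mT iY2 iT2 me0 hce mm0 hcm mTh bTh mm me h1.
have Ob := orth_theta mW mT iT2 me0 hce mTh bTh hth Ths.
have Db := Dl_bound mW me0 mm0 mTh bTh mm me h1 Ths.
have Dp := Ei_ge0 D (fun z => sqr_ge0 (Dl Wf e0 m0 m e th z)).
rewrite Ob mule0 (L0 _ hth) (L0 _ Ths) -EFinB !lee_fin.
have am := argmin _ hth; rewrite (L0 _ hth) (L0 _ Ths) lee_fin in am.
rewrite (Lg _ hth) (Lg _ Ths) -EFinB lee_fin in h2.
split; first by rewrite subr_ge0.
lra.
Qed.
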